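(* Assume $\bar p=\mu\cdot\mathbf p=1/2$. There exist constants $C,C'>0$ and $y_0<\infty$ such that for all $n\ge1$, all $y\ge y_0$ and every initial distribution $\eta$ on $\mathcal R$, $$P_\eta\Big(\Big|\sum_{j=1}^n(\tilde G_j-1)\Big|>y\Big)\le C\Big(\exp\Big\{-C'\frac{y^2}{y\vee 8n}\Big\}+\exp\{-C'y\}\Big).$$
   Context: Let $\mathcal R=\{1,\dots,N\}$ and let $K$ be a stochastic matrix on $\mathcal R$ whose Markov chain has a unique closed irreducible subset; let $\mu$ (row vector) be its unique stationary distribution. Fix $p:\mathcal R\to(0,1)$, $\mathbf p=(p(1),\dots,p(N))^t$. Under $P_\eta$, $(R_j)_{j\ge1}$ is a Markov chain with transition matrix $K$ and $R_1\sim\eta$, and given $(R_j)$ the $\xi(j)$ are independent Bernoulli$(p(R_j))$. Let $F_m=\inf\{k\ge0:\sum_{j=1}^{k+m}\xi(j)=m\}$ (number of failures before the $m$-th success), $F_0=0$, and $\tilde G_m=F_m-F_{m-1}$ (number of failures between the $(m-1)$-st and $m$-th success). *)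

(* Defs.v *)
From HB Require Import structures.
From mathcomp Require Import all_boot all_order all_algebra.
From mathcomp Require Import all_classical all_reals.
From mathcomp Require Import all_analysis.
Set Implicit Arguments. Unset Strict Implicit. Unset Printing Implicit Defensive.
Import Order.TTheory GRing.Theory Num.Theory.
Local Open Scope ring_scope.

Section Defs.
Variables (R : realType) (N : nat).

Definition stochastic (K : 'M[R]_N) : Prop :=
  (forall i j, 0 <= K i j) /\ (forall i, \sum_j K i j = 1).

Definition step (K : 'M[R]_N) : rel 'I_N := fun i j => 0 < K i j.

Definition closed_irreducible (K : 'M[R]_N) (C : {set 'I_N}) : Prop :=
  C != finset.set0 /\
  (forall i j, i \in C -> 0 < K i j -> j \in C) /\
  (forall i j, i \in C -> j \in C -> connect (step K) i j).

Definition unique_closed_irreducible (K : 'M[R]_N) : Prop :=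
  exists C, closed_irreducible K C /\
            forall C', closed_irreducible K C' -> C' = C.

Definition prob_vec (v : 'rV[R]_N) : Prop :=
  (forall i, 0 <= v 0 i) /\ \sum_i v 0 i = 1.

Definition stationary (K : 'M[R]_N) (mu : 'rV[R]_N) : Prop :=
  prob_vec mu /\ mu *m K = mu.

(* probability under P_eta that (R_1..R_L) = (r 0 .. r (L-1)) and
   (xi(1)..xi(L)) = (b 0 .. b (L-1)); indices are shifted to start at 0 *)
Definition bern (q : R) (b : bool) : R := if b then q else 1 - q.

Definition fdd (K : 'M[R]_N) (p : 'I_N -> R) (eta : 'rV[R]_N)
    (L : nat) (r : nat -> 'I_N) (b : nat -> bool) : R :=
  if L is 0 then 1 else
    eta 0 (r 0%N) * (\prod_(i < L.-1) K (r i) (r i.+1))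
      * \prod_(i < L) bern (p (r i)) (b i).

Section Path.
Variables (T : Type) (xi : nat -> T -> bool).

(* number of successes among xi(1),...,xi(k)  (xi(j+1) is xi j here) *)
Definition nsucc (k : nat) (w : T) : nat := \sum_(j < k) (xi j w : nat).

Definition Ffail (m : nat) (w : T) : \bar R :=
  match pselect (exists k, nsucc (k + m) w == m) with
  | left h => ((ex_minn h)%:R)%:E
  | right _ => +oo%E
  end.

Definition Gt (m : nat) (w : T) : \bar R := (Ffail m w - Ffail m.-1 w)%E.

Definition sumG (n : nat) (w : T) : \bar R :=
  (\sum_(1 <= j < n.+1) (Gt j w - 1%:E))%E.
End Path.

End Defs.

(* Main.v *)
Require Import Defs.
From HB Require Import structures.
From mathcomp Require Import all_boot all_order all_algebra.
From mathcomp Require Import all_classical all_reals.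
From mathcomp Require Import all_analysis.
From mathcomp Require Import zify ring lra.
Import Order.TTheory GRing.Theory Num.Theory.

Local Open Scope ring_scope.

Section LinAlg.
Variables (R : realType) (N : nat) (K : 'M[R]_N).
Hypothesis sK : stochastic K.
Hypothesis uK : unique_closed_irreducible K.

Definition reach (i : 'I_N) : {set 'I_N} := [set j | connect (step K) i j].

Lemma closed_connect (S : {set 'I_N}) : (forall i j, i \in S -> 0 < K i j -> j \in S) ->
  forall i j, i \in S -> connect (step K) i j -> j \in S.
Proof.
move=> cS i j iS /connectP [s pth ->]. elim: s i iS pth => [|a s IH] i iS //=.
case/andP => sa ps. apply: IH ps. exact: cS sa.
Qed.

Lemma closed_has_ci (S : {set 'I_N}) : S != finset.set0 ->
  (forall i j, i \in S -> 0 < K i j -> j \in S) ->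
  exists C, closed_irreducible K C /\ C \subset S.
Proof.
move=> /set0Pn [i0 i0S] cS.
suff H : forall n i, i \in S -> (#|reach i| <= n)%N ->
    exists C, closed_irreducible K C /\ C \subset S.
  exact: (H _ i0 i0S (leqnn _)).
elim=> [|n IH] i iS.
  by rewrite leqn0 => /eqP /cards0_eq /setP /(_ i); rewrite !inE connect0.
move=> hn.
case: (boolP [forall j, (j \in reach i) ==> connect (step K) j i]) =>
   [/forallP Hall | /forallPn [j]].
- exists (reach i); split; last first.
    apply/fintype.subsetP => j; rewrite inE; exact: closed_connect cS i j iS.
  split; first by apply/set0Pn; exists i; rewrite inE connect0.
  split.
  + move=> a b; rewrite !inE => ia Kab. apply: connect_trans ia (connect1 _). exact Kab.
  + move=> a b; rewrite !inE => ia ib. move: (Hall a); rewrite inE ia /= => ai.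
    exact: connect_trans ai ib.
- rewrite negb_imply inE => /andP [ij nji].
  apply: (IH j); first exact: closed_connect cS i j iS ij.
  rewrite -ltnS. apply: leq_trans hn. apply: proper_card. apply/properP; split.
  + apply/fintype.subsetP => k; rewrite !inE. exact: connect_trans ij.
  + by exists i; rewrite !inE ?connect0.
Qed.

Lemma harmonic_max (v : 'I_N -> R) : (forall i, v i = \sum_j K i j * v j) ->
  exists C, closed_irreducible K C /\ forall c i, c \in C -> v i <= v c.
Proof.
move=> hv. case: uK => C [ciC uC]. exists C; split => // c i cC.
case: (@arg_maxP _ R _ c xpredT v isT) => im _ Him.
pose S := [set j | v j == v im].
have S0 : S != finset.set0 by apply/set0Pn; exists im; rewrite inE.
have cS : forall i j, i \in S -> 0 < K i j -> j \in S.
  move=> a b; rewrite inE => /eqP va Kab; rewrite inE.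
  have H0 : \sum_j K a j * (v im - v j) = 0.
    under eq_bigr do rewrite mulrBr.
    rewrite sumrB -mulr_suml (proj2 sK) mul1r -hv va subrr //.
  have := psumr_eq0P _ H0 (i:=b) isT. 
  move=> /(_ _) H. have {}H : K a b * (v im - v b) = 0.
    apply: H => j _; apply: mulr_ge0; first exact: (proj1 sK).
    by rewrite subr_ge0; apply: Him.
  move/eqP: H; rewrite mulf_eq0 (gt_eqF Kab) /= subr_eq0 => /eqP <- //.
have [C' [ciC' sub]] := @closed_has_ci S S0 cS.
rewrite (uC _ ciC') in sub. move/fintype.subsetP: sub => /(_ c cC); rewrite inE => /eqP ->.
exact: Him.
Qed.

Lemma harmonic_const (v : 'I_N -> R) : (forall i, v i = \sum_j K i j * v j) ->
  forall i j, v i = v j.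
Proof.
move=> hv.
have [C [ciC H1]] := @harmonic_max _ hv.
have hv' : forall i, (fun j => - v j) i = \sum_j K i j * (fun j => - v j) j.
  by move=> i; rewrite /= hv -sumrN; apply: eq_bigr => j _; rewrite mulrN.
have [C' [ciC' H2]] := @harmonic_max _ hv'.
case: uK => C0 [_ uC].
have E : C' = C by rewrite (uC _ ciC') (uC _ ciC).
subst C'.
case: ciC => /set0Pn [c cC] _.
have e : forall i, v i = v c.
  move=> i; apply/eqP; rewrite eq_le H1 //=.
  by have := H2 c i cC; rewrite /= lerN2.
by move=> i j; rewrite !e.
Qed.


Lemma harm_row (u : 'rV[R]_N) : u *m (1%:M - K)^T = 0 ->
  forall i, u 0 i = \sum_j K i j * u 0 j.
Proof.
move=> /matrixP H i. move: (H 0 i); rewrite !mxE => E.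
apply/eqP; rewrite -subr_eq0; apply/eqP; rewrite -[RHS]E.
under [RHS]eq_bigr do rewrite !mxE mulrBr.
rewrite sumrB; congr (_ - _); last by apply: eq_bigr => j _; rewrite mulrC.
rewrite (bigD1 i) //= eqxx mulr1 big1 ?addr0 // => j.
by rewrite eq_sym => /negbTE ->; rewrite mulr0.
Qed.

Lemma poisson (mu : 'rV[R]_N) (f : 'I_N -> R) : stationary K mu ->
  \sum_i mu 0 i * f i = 0 ->
  exists h : 'I_N -> R, forall i, h i - \sum_j K i j * h j = f i.
Proof.
move=> [[mu0 mu1] muK] muf.
have [c _] : exists c : 'I_N, True.
  by case: uK => C [[/set0Pn [c _] _] _]; exists c.
pose A : 'M[R]_N := (1%:M - K)^T.
pose ones : 'rV[R]_N := const_mx 1.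
have kA : (kermx A <= ones)%MS.
  apply/row_subP => i. set u := row i (kermx A).
  have uA : u *m A = 0 by rewrite -row_mul mulmx_ker row0.
  have hc := @harmonic_const _ (@harm_row _ uA).
  have -> : u = u 0 c *: ones.
    by apply/matrixP => a b; rewrite [RHS]mxE /ones [const_mx _ _ _]mxE mulr1 (ord1 a); exact: hc.
  exact: scalemx_sub.
have rkA : (N <= \rank A + 1)%N.
  have := mxrankS kA. rewrite mxrank_ker. have := rank_leq_row ones.
  have := rank_leq_row A. lia.
pose m : 'cV[R]_N := mu^T.
have Am : A *m m = 0.
  by rewrite /A /m -trmx_mul mulmxBr mulmx1 muK subrr trmx0.
have m0 : m != 0.
  apply/negP => /eqP m0; move: mu1.
  rewrite big1; first by move/eqP; rewrite eq_sym oner_eq0.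
  move=> i _.
  by have := congr1 (fun M : 'cV[R]_N => M i 0) m0; rewrite !mxE.
have rm : \rank m = 1%N.
  have := rank_leq_col m. have : (\rank m != 0)%N by rewrite mxrank_eq0.
  lia.
have rkm : \rank (kermx m) = (N - 1)%N by rewrite mxrank_ker rm.
have sub : (A <= kermx m)%MS by apply/sub_kermxP.
have /andP [_ sub2] : (A == kermx m)%MS.
  rewrite -(mxrank_leqif_eq sub).2. have le1 := (mxrank_leqif_eq sub).1.
  rewrite rkm in le1 *. apply/eqP. lia.
pose fr : 'rV[R]_N := \row_i f i.
have : (fr <= kermx m)%MS.
  apply/sub_kermxP; apply/matrixP => a b; rewrite !mxE (ord1 b) -[RHS]muf.
  by apply: eq_bigr => j _; rewrite !mxE mulrC.
move=> /submx_trans /(_ sub2) /submxP [D fD].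
exists (fun j => D 0 j) => i.
have := congr1 (fun M : 'rV[R]_N => M 0 i) fD; rewrite !mxE => ->; rewrite /A.
symmetry; under eq_bigr do rewrite !mxE mulrBr.
rewrite sumrB; congr (_ - _); last by apply: eq_bigr => j _; rewrite mulrC.
rewrite (bigD1 i) //= eqxx mulr1 big1 ?addr0 // => j.
by rewrite eq_sym => /negbTE ->; rewrite mulr0.
Qed.
End LinAlg.

Section RealBits.
Variable R : realType.

Lemma expR_quad (x : R) : `|x| <= 1/2 -> expR x <= 1 + x + 2 * x ^+ 2.
Proof.
move=> hx.
have hx2 : x <= 1/2 /\ - (1/2) <= x by move: hx; rewrite ler_norml => /andP [] ; split.
have pos : 0 < 1 - x by lra.
have E : expR x * (1 - x) <= 1.
  apply: (@le_trans _ _ (expR x * expR (- x))); last by rewrite expRxMexpNx_1.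
  apply: ler_wpM2l; first exact: expR_ge0. exact: expR_ge1Dx.
have E2 : 1 <= (1 + x + 2 * x ^+ 2) * (1 - x).
  have : 0 <= x ^+ 2 * (1 - 2 * x) by apply: mulr_ge0; [exact: sqr_ge0| lra].
  move=> H; rewrite -subr_ge0; apply: le_trans H _. rewrite le_eqVlt; apply/orP; left.
  apply/eqP; ring.
rewrite -(ler_pM2r pos). exact: le_trans E E2.
Qed.

Lemma mgf_step (T : finType) (w v : T -> R) (B l : R) :
  (forall x, 0 <= w x) -> \sum_x w x = 1 -> \sum_x w x * v x = 0 ->
  (forall x, `|v x| <= B) -> `|l| * B <= 1/2 ->
  \sum_x w x * expR (l * v x) <= expR (2 * l ^+ 2 * B ^+ 2).
Proof.
move=> w0 w1 wv vB lB.
have H1 : \sum_x w x * expR (l * v x) <= \sum_x w x * (1 + l * v x + 2 * l ^+ 2 * B ^+ 2).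
  apply: ler_sum => x _; apply: ler_wpM2l => //.
  have hlv : `|l * v x| <= 1/2.
    rewrite normrM; apply: le_trans lB; apply: ler_wpM2l => //.
  apply: le_trans (expR_quad _ hlv) _. rewrite lerD2l.
  rewrite exprMn -mulrA ler_wpM2l // ler_wpM2l ?sqr_ge0 //.
  by have := vB x; rewrite ler_norml => /andP [a b]; nra.
apply: le_trans H1 _.
under eq_bigr do rewrite mulrDr mulrDr.
rewrite !big_split /= -!mulr_suml w1 !mul1r.
rewrite (eq_bigr _ (fun i _ => mulrCA (w i) l (v i))) -mulr_sumr wv mulr0 addr0.
exact: expR_ge1Dx.
Qed.
End RealBits.

Section Paths.
Variables (R : realType) (N : nat) (K : 'M[R]_N) (p : 'I_N -> R) (eta : 'rV[R]_N).
Variable (h : 'I_N -> R).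

Definition upd (g : nat -> 'I_N * bool) (j : nat) (x : 'I_N * bool) : nat -> 'I_N * bool :=
  fun i => if i == j then x else g i.

Fixpoint psum (m j : nat) (pre : nat -> 'I_N * bool)
    (Phi : (nat -> 'I_N * bool) -> R) : R :=
  if m is m'.+1 then \sum_(x : 'I_N * bool) psum m' j.+1 (upd pre j x) Phi
  else Phi pre.

Lemma psum_le m j pre (Phi Psi : (nat -> 'I_N * bool) -> R) :
  (forall g, Phi g <= Psi g) -> psum m j pre Phi <= psum m j pre Psi.
Proof.
move=> H; elim: m j pre => [|m IH] j pre /=; first exact: H.
by apply: ler_sum => x _; apply: IH.
Qed.

Lemma psum_mulr m j pre (Phi : (nat -> 'I_N * bool) -> R) c :
  psum m j pre (fun g => Phi g * c) = psum m j pre Phi * c.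
Proof.
elim: m j pre => [|m IH] j pre //=.
by rewrite mulr_suml; apply: eq_bigr => x _; rewrite IH.
Qed.

Definition fddg L (g : nat -> 'I_N * bool) :=
  fdd K p eta L (fun i => (g i).1) (fun i => (g i).2).

Lemma fdd_step j pre x :
  fddg j.+1 (upd pre j x) =
  fddg j pre * (if j is j'.+1 then K (pre j').1 x.1 else eta 0 x.1)
    * bern (p x.1) x.2.
Proof.
rewrite /fddg /fdd /upd; case: j => [|j] /=.
  by rewrite big_ord0 big_ord1 /= mulr1 mul1r.
rewrite [\prod_(i < j.+1) K _ _]big_ord_recr [\prod_(i < j.+2) _]big_ord_recr /= eqxx.
have -> : (j == j.+1) = false by rewrite ltn_eqF.
rewrite (@eq_bigr _ _ _ _ _ _ (fun i : 'I_j => K (if i == j.+1 :> nat then x else pre i).1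
       (if i.+1 == j.+1 then x else pre i.+1).1) (fun i : 'I_j => K (pre i).1 (pre i.+1).1)).
  rewrite (@eq_bigr _ _ _ _ _ _ (fun i : 'I_j.+1 => bern (p (if i == j.+1 :> nat then x else pre i).1)
       (if i == j.+1 :> nat then x else pre i).2) (fun i : 'I_j.+1 => bern (p (pre i).1) (pre i).2)).
    by rewrite /=; ring.
  by move=> i _; rewrite ltn_eqF.
by move=> i _; rewrite !ltn_eqF // ltnS // ltnW.
Qed.


Definition Kh (i : 'I_N) := \sum_l K i l * h l.

Definition incr (g : nat -> 'I_N * bool) (j : nat) : R :=
  ((g j).2 : nat)%:R - p (g j).1 +
  (if j is j'.+1 then h (g j).1 - Kh (g j').1 else 0).

Definition Dk (k : nat) g := \sum_(j < k) incr g j.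

Lemma Dk_upd j pre x :
  Dk j.+1 (upd pre j x) = Dk j pre + incr (upd pre j x) j.
Proof.
rewrite /Dk big_ord_recr /=; congr (_ + _).
apply: eq_bigr => i _; rewrite /incr /upd ltn_eqF //.
by case: (nat_of_ord i) (ltn_ord i) => [|i'] //= lt; rewrite ltn_eqF // ltnW.
Qed.

Lemma Dk_upd_j j pre x : incr (upd pre j x) j =
  (x.2 : nat)%:R - p x.1 + (if j is j'.+1 then h x.1 - Kh (pre j').1 else 0).
Proof.
rewrite /incr /upd eqxx; case: j => [|j] //=.
by rewrite ltn_eqF.
Qed.

Hypothesis sK : stochastic K.
Hypothesis peta : prob_vec eta.
Hypothesis p01 : forall i, 0 < p i < 1.

Lemma bern_ge0 i b : 0 <= bern (p i) b.
Proof. by case: b => /=; have := p01 i; move=> /andP [a c]; lra. Qed.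

Lemma fdd_ge0 L g : 0 <= fddg L g.
Proof.
rewrite /fddg /fdd; case: L => [|L] //.
apply: mulr_ge0; [apply: mulr_ge0|]; first exact: (proj1 peta).
  by apply: prodr_ge0 => i _; exact: (proj1 sK).
by apply: prodr_ge0 => i _; exact: bern_ge0.
Qed.

Lemma fdd0 g : fddg 0 g = 1.
Proof. by []. Qed.


Lemma sum_pair (F : 'I_N * bool -> R) :
  \sum_x F x = \sum_i (F (i, true) + F (i, false)).
Proof.
transitivity (\sum_i \sum_(b : bool) F (i, b)).
  by rewrite pair_bigA; apply: eq_bigr => -[i b].
by apply: eq_bigr => i _; rewrite big_bool.
Qed.

Variable H : R.
Hypothesis H0 : 0 <= H.

Lemma wstep (q a : 'I_N -> R) l : (forall i, 0 <= q i) -> \sum_i q i = 1 ->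
  \sum_i q i * a i = 0 -> (forall i, `|a i| <= 2 * H) -> `|l| * (1 + 2 * H) <= 1/2 ->
  \sum_(x : 'I_N * bool) q x.1 * bern (p x.1) x.2 *
     expR (l * ((x.2 : nat)%:R - p x.1 + a x.1))
  <= expR (2 * l ^+ 2 * (1 + 2 * H) ^+ 2).
Proof.
move=> q0 q1 qa aH lB.
refine (@mgf_step R _ (fun x => q x.1 * bern (p x.1) x.2)
   (fun x => (x.2 : nat)%:R - p x.1 + a x.1) _ _ _ _ _ _ _) => //.
- by move=> x; apply: mulr_ge0 => //; exact: bern_ge0.
- rewrite sum_pair -[RHS]q1; apply: eq_bigr => i _ /=; ring.
- rewrite sum_pair -[RHS]qa; apply: eq_bigr => i _ /=; ring.
- move=> x; apply: le_trans (ler_normD _ _) _; rewrite lerD //.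
  have := p01 x.1; case: x.2 => /= /andP [a1 a2]; rewrite ?mulr1n ?mulr0n ler_norml;
  apply/andP; split; lra.
Qed.

Lemma expmom k l : `|l| * (1 + 2 * H) <= 1/2 ->
  (forall i, `|h i| <= H) -> (forall i, `|Kh i| <= H) ->
  forall m j pre, (j + m)%N = k ->
  psum m j pre (fun g => fddg k g * expR (l * Dk k g))
  <= fddg j pre * expR (l * Dk j pre) * expR (2 * l ^+ 2 * (1 + 2 * H) ^+ 2) ^+ m.
Proof.
move=> lB hH KhH; set e := expR _.
elim=> [|m IH] j pre hjk /=.
  by move: hjk; rewrite addn0 => ->; rewrite expr0 mulr1.
have hjk' : (j.+1 + m)%N = k by rewrite addSnnS.
apply: (@le_trans _ _ (\sum_(x : 'I_N * bool) fddg j.+1 (upd pre j x) *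
     expR (l * Dk j.+1 (upd pre j x)) * e ^+ m)).
  by apply: ler_sum => x _; apply: IH.
set F := fddg j pre * expR (l * Dk j pre) * e ^+ m.
have -> : \sum_(x : 'I_N * bool) fddg j.+1 (upd pre j x) *
     expR (l * Dk j.+1 (upd pre j x)) * e ^+ m =
  F * \sum_(x : 'I_N * bool) (if j is j'.+1 then K (pre j').1 x.1 else eta 0 x.1)
     * bern (p x.1) x.2 * expR (l * incr (upd pre j x) j).
  rewrite mulr_sumr; apply: eq_bigr => x _.
  rewrite fdd_step Dk_upd mulrDr expRD /F; ring.
have -> : fddg j pre * expR (l * Dk j pre) * e ^+ m.+1 = F * e
  by rewrite /F exprS; ring.
apply: ler_wpM2l.
  rewrite /F; apply: mulr_ge0; [apply: mulr_ge0|]; [exact: fdd_ge0|exact: expR_ge0|].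
  by apply: exprn_ge0; exact: expR_ge0.
under eq_bigr do rewrite Dk_upd_j.
case: j {hjk hjk' IH F} => [|j] /=.
- apply: (wstep (fun i => eta 0 i) (fun _ => 0)) => //.
  + exact: (proj1 peta).
  + exact: (proj2 peta).
  + by rewrite big1 // => i _; rewrite mulr0.
  + by move=> i; rewrite normr0 mulr_ge0.
- apply: (wstep (fun i => K (pre j).1 i) (fun i => h i - Kh (pre j).1)) => //.
  + by move=> i; exact: (proj1 sK).
  + exact: (proj2 sK).
  + under eq_bigr do rewrite mulrBr.
    by rewrite sumrB -mulr_suml (proj2 sK) mul1r subrr.
  + move=> i; apply: le_trans (ler_normB _ _) _.
    have := hH i; have := KhH (pre j).1; lra.
Qed.


Local Open Scope classical_set_scope.

Variables (d : measure_display) (Omega : measurableType d) (P : probability Omega R)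
  (Rc : nat -> Omega -> 'I_N) (xi : nat -> Omega -> bool).
Hypothesis mRc : forall j r, measurable [set w | Rc j w = r].
Hypothesis mxi : forall j, measurable [set w | xi j w = true].
Hypothesis hfdd : forall L (r : nat -> 'I_N) (b : nat -> bool),
  P [set w | forall j, (j < L)%N -> Rc j w = r j /\ xi j w = b j] = (fdd K p eta L r b)%:E.

Definition pathw (w : Omega) : nat -> 'I_N * bool := fun i => (Rc i w, xi i w).
Definition cyl j (pre : nat -> 'I_N * bool) : set Omega :=
  [set w | forall i, (i < j)%N -> Rc i w = (pre i).1 /\ xi i w = (pre i).2].

Lemma cyl0 pre : cyl 0 pre = setT.
Proof. by apply/seteqP; split => w // _ i. Qed.

Lemma cyl_meas j pre : measurable (cyl j pre).
Proof.
elim: j => [|j IH]; first by rewrite cyl0; exact: measurableT.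
have -> : cyl j.+1 pre =
    cyl j pre `&` [set w | Rc j w = (pre j).1] `&` [set w | xi j w = (pre j).2].
  apply/seteqP; split => w /=.
  - move=> Hc; split; [split|].
    + by move=> i lt; apply: Hc; exact: ltnW.
    + exact: (Hc j (ltnSn j)).1.
    + exact: (Hc j (ltnSn j)).2.
  - move=> [[H1 H2] H3] i; rewrite ltnS leq_eqVlt => /orP [/eqP -> //|lt].
    exact: H1.
apply: measurableI; [apply: measurableI => //|].
case: (pre j).2; first exact: mxi.
have -> : [set w | xi j w = false] = ~` [set w | xi j w = true].
  by apply/seteqP; split => w /=; [move=> -> | move/negP/negbTE].
exact: measurableC.
Qed.

Lemma bigU_le (I : Type) (s : seq I) (F : I -> set Omega) :
  (forall i, measurable (F i)) ->
  measurable (\big[setU/set0]_(i <- s) F i) /\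
  (P (\big[setU/set0]_(i <- s) F i) <= \sum_(i <- s) P (F i))%E.
Proof.
move=> mF; elim: s => [|a s [m IH]]; rewrite ?big_nil ?big_cons.
  by split; [exact: measurable0| rewrite measure0].
split; first exact: measurableU.
apply: le_trans (measureU2 _ _ _) _ => //.
exact: leeD2l.
Qed.

Lemma bigU_in (I : eqType) (s : seq I) (F : I -> set Omega) w i :
  i \in s -> F i w -> (\big[setU/set0]_(i <- s) F i) w.
Proof.
elim: s => [|a s IH] //; rewrite big_cons inE => /orP [/eqP <- Fw|ins Fw].
  by left.
by right; apply: IH.
Qed.

Lemma bigU_ex (I : Type) (s : seq I) (F : I -> set Omega) w :
  (\big[setU/set0]_(i <- s) F i) w -> exists i, F i w.
Proof.
elim: s => [|a s IH]; rewrite ?big_nil ?big_cons //.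
by case=> [Fa|/IH //]; exists a.
Qed.

Lemma ev_bound (Phi : (nat -> 'I_N * bool) -> bool) k :
  (forall g g', (forall i, (i < k)%N -> g i = g' i) -> Phi g = Phi g') ->
  forall m j pre, (j + m)%N = k ->
  measurable ([set w | Phi (pathw w)] `&` cyl j pre) /\
  (P ([set w | Phi (pathw w)] `&` cyl j pre)
    <= (psum m j pre (fun g => (Phi g)%:R * fddg k g))%:E)%E.
Proof.
move=> loc; elim=> [|m IH] j pre hjk /=.
  move: hjk; rewrite addn0 => hjk; subst j.
  have E : forall w, cyl k pre w -> Phi (pathw w) = Phi pre.
    move=> w cw; apply: loc => i lt; rewrite /pathw.
    by case: (cw i lt) => -> ->; case: (pre i).
  case: (boolP (Phi pre)) => Hp.
  - have -> : [set w | Phi (pathw w)] `&` cyl k pre = cyl k pre.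
      apply/seteqP; split => w /=; first by case.
      by move=> cw; split => //; rewrite E.
    split; first exact: cyl_meas.
    by rewrite /cyl hfdd mul1r.
  - have -> : [set w | Phi (pathw w)] `&` cyl k pre = set0.
      apply/seteqP; split => w //= [Pw cw].
      by move: Pw; rewrite E // (negbTE Hp).
    by split; [exact: measurable0| rewrite measure0 mul0r].
have hjk' : (j.+1 + m)%N = k by rewrite addSnnS.
have -> : [set w | Phi (pathw w)] `&` cyl j pre =
   \big[setU/set0]_(x <- index_enum ('I_N * bool)%type)
      ([set w | Phi (pathw w)] `&` cyl j.+1 (upd pre j x)).
  apply/seteqP; split => w /=.
  - move=> [Pw cw]. apply: (@bigU_in _ _ _ w (pathw w j)); first exact: mem_index_enum.
    split => // i; rewrite ltnS leq_eqVlt => /orP [/eqP ->|lt].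
      by rewrite /upd eqxx.
    by rewrite /upd ltn_eqF //; apply: cw.
  - move=> /bigU_ex [x [Pw cw]]; split => // i lt.
    by have := cw i (ltnW lt); rewrite /upd ltn_eqF.
have [mU leU] := @bigU_le _ (index_enum ('I_N * bool)%type)
   (fun x => [set w | Phi (pathw w)] `&` cyl j.+1 (upd pre j x))
   (fun x => (IH j.+1 (upd pre j x) hjk').1).
split => //; apply: le_trans leU _.
rewrite -sumEFin; apply: lee_sum => x _.
exact: (IH j.+1 (upd pre j x) hjk').2.
Qed.


Variable i0 : 'I_N.

Lemma chernoff_ev (Phi : (nat -> 'I_N * bool) -> bool) k l s :
  (forall g g', (forall i, (i < k)%N -> g i = g' i) -> Phi g = Phi g') ->
  `|l| * (1 + 2 * H) <= 1/2 ->
  (forall i, `|h i| <= H) -> (forall i, `|Kh i| <= H) ->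
  (forall g, Phi g -> s <= l * Dk k g) ->
  measurable [set w | Phi (pathw w)] /\
  (P [set w | Phi (pathw w)] <=
     (expR (2 * l ^+ 2 * (1 + 2 * H) ^+ 2) ^+ k * expR (- s))%:E)%E.
Proof.
move=> loc lB hH KhH hs.
pose pre := fun _ : nat => (i0, true).
have [m1 le1] := @ev_bound Phi k loc k 0 pre (add0n k).
rewrite cyl0 setIT in m1 le1.
split => //; apply: le_trans le1 _; rewrite lee_fin.
apply: le_trans (@psum_le k 0 pre _
   (fun g => fddg k g * expR (l * Dk k g) * expR (- s)) _) _.
  move=> g; case: (boolP (Phi g)) => Pg /=.
    rewrite mul1r -[X in X <= _]mulr1 -mulrA ler_wpM2l ?fdd_ge0 // -expRD.
    have := hs g Pg; have := expR_ge1Dx (l * Dk k g + - s); lra.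
  rewrite mul0r; apply: mulr_ge0; [apply: mulr_ge0|]; by [exact: fdd_ge0|exact: expR_ge0].
rewrite psum_mulr; apply: ler_wpM2r; first exact: expR_ge0.
apply: le_trans (@expmom k l lB hH KhH k 0 pre (add0n k)) _.
by rewrite fdd0 /Dk big_ord0 mulr0 expR0 !mul1r.
Qed.

Hypothesis hpois : forall i, h i - Kh i = p i - 1/2.

Lemma nsucc_D (g : nat -> 'I_N * bool) k :
  (\sum_(i < k.+1) ((g i).2 : nat))%:R - k.+1%:R / 2 - Dk k.+1 g
  = h (g 0%N).1 - Kh (g k).1.
Proof.
elim: k => [|k IH].
  rewrite big_ord1 /Dk big_ord1 /incr /= addr0.
  have := hpois (g 0%N).1. lra.
have e1 : \sum_(i < k.+2) ((g i).2 : nat) = (\sum_(i < k.+1) ((g i).2 : nat) + (g k.+1).2)%N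
  by rewrite big_ord_recr.
have e2 : Dk k.+2 g = Dk k.+1 g + incr g k.+1 by rewrite /Dk big_ord_recr.
have e3 : (k.+2)%:R = (k.+1)%:R + 1 :> R by rewrite -addn1 natrD.
rewrite e1 e2 e3 natrD /incr /=.
have := hpois (g k.+1).1. move: IH. lra.
Qed.

Lemma nsucc_D_bound (g : nat -> 'I_N * bool) k :
  (forall i, `|h i| <= H) -> (forall i, `|Kh i| <= H) ->
  `|(\sum_(i < k.+1) ((g i).2 : nat))%:R - k.+1%:R / 2 - Dk k.+1 g| <= 2 * H.
Proof.
move=> hH KhH; rewrite nsucc_D; apply: le_trans (ler_normB _ _) _.
have := hH (g 0%N).1; have := KhH (g k).1; lra.
Qed.

End Paths.

Section Comb.
Variables (R : realType) (T : Type) (xi : nat -> T -> bool) (w : T).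

Local Notation ns k := (nsucc xi k w).

Lemma ns_S k : ns k.+1 = (ns k + xi k w)%N.
Proof. by rewrite /nsucc big_ord_recr. Qed.

Lemma ns_le k : (ns k <= k)%N.
Proof. elim: k => [|k IH]; first by rewrite /nsucc big_ord0. rewrite ns_S. case: (xi k w) => /=; lia. Qed.

Lemma ns_mono k k' : (k <= k')%N -> (ns k <= ns k')%N.
Proof.
move=> /subnK <-; elim: (k' - k)%N => [|j IH] //=.
rewrite addSn ns_S; lia.
Qed.

Lemma ns_ivt m K : (m <= ns K)%N -> exists k, ns k = m.
Proof.
elim: K => [|K IH].
  by rewrite /nsucc big_ord0 leqn0 => /eqP ->; exists 0%N; rewrite /nsucc big_ord0.
rewrite ns_S => hm.
case: (ltngtP m (ns K.+1)) => [lt|gt|eq].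
- apply: IH; move: lt; rewrite ns_S; case: (xi K w) => /=; lia.
- by move: gt hm; rewrite ns_S; lia.
- by exists K.+1.
Qed.

Lemma ex_of m : (exists K, (m <= ns K)%N) -> exists k, ns (k + m) == m.
Proof.
case=> K /ns_ivt [k hk]. exists (k - m)%N.
have := ns_le k; rewrite hk => le; rewrite subnK //; exact/eqP.
Qed.

Lemma Ffail_cases m :
  (Ffail R xi m w = +oo%E /\ forall K, (ns K < m)%N) \/
  (exists F : nat, Ffail R xi m w = (F%:R)%:E /\
     forall a, (F <= a)%N <-> (m <= ns (a + m))%N).
Proof.
rewrite /Ffail; case: pselect => [e|ne].
- right; exists (ex_minn e); split => //.
  case: ex_minnP => F /eqP hF Fmin a; split.
  + by move=> le; rewrite -{1}hF; apply: ns_mono; lia.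
  + move=> ha; case: (leqP F a) => // lt.
    have : (F <= a)%N.
      apply: Fmin; rewrite eqn_leq ha andbT -{2}hF.
      by apply: ns_mono; lia.
    by rewrite leqNgt lt.
- left; split => // K; rewrite ltnNge; apply/negP => hK.
  by apply: ne; apply: ex_of; exists K.
Qed.


Lemma sumG_fin n F : Ffail R xi n w = (F%:R)%:E ->
  (forall a, (F <= a)%N <-> (n <= ns (a + n))%N) ->
  sumG R xi n w = (F%:R - n%:R)%:E.
Proof.
move=> hFn hc.
have fin : forall j, (j <= n)%N -> exists v : nat, Ffail R xi j w = (v%:R)%:E.
  move=> j jn; case: (Ffail_cases j) => [[_ hK]|[v [hv _]]]; last by exists v.
  have := hK (F + n)%N; have := (hc F).1 (leqnn F); lia.
suff: forall n', (n' <= n)%N -> exists v : nat,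
    Ffail R xi n' w = (v%:R)%:E /\ sumG R xi n' w = (v%:R - n'%:R)%:E.
  move=> /(_ n (leqnn n)) [v [hv ->]]; move: hv; rewrite hFn => -[->] //.
elim=> [|n' IH] hn'.
  case: (Ffail_cases 0) => [[_ hK]|[v [hv hcv]]]; first by have := hK 0%N.
  have v0 : v = 0%N by have := (hcv 0%N).2 (leq0n _); lia.
  subst v; exists 0%N; split => //.
  by rewrite /sumG big_geq // subrr.
have [v [hv hs]] := IH (ltnW hn').
have [v' hv'] := fin _ hn'.
exists v'; split => //.
have e : sumG R xi n'.+1 w = (sumG R xi n' w + (Gt R xi n'.+1 w - 1%:E))%E
  by rewrite /sumG big_nat_recr.
rewrite e hs /Gt /= hv hv' -!EFinB -EFinD; congr EFin.
rewrite -addn1 natrD; ring.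
Qed.

Lemma sumG_char n y : (1 <= n)%N -> 0 <= y ->
  (y%:E < `|sumG R xi n w|)%E <->
  ((ns (2 * n + Num.truncn y) < n)%N \/
   ((Num.truncn y < n)%N /\ (n <= ns (2 * n - Num.truncn y - 1))%N)).
Proof.
move=> hn y0; set q := Num.truncn y.
have /andP [hq1 hq2] := truncn_itv y0; rewrite -/q in hq1 hq2.
have hq2' : y < q%:R + 1 by rewrite -addn1 natrD in hq2.
case: (Ffail_cases n) => [[hinf hK]|[F [hF hc]]].
- split=> _; first by left; exact: hK.
  have : sumG R xi n w \isn't a fin_num.
    rewrite /sumG; case: n hn {hK} hinf => // n' _ hinf.
    rewrite big_nat_recr //= fin_numD negb_and; apply/orP; right.
    by rewrite fin_numD /Gt fin_numB hinf.
  by move/fin_numPn => [->|->]; rewrite /= ltry.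
- rewrite (sumG_fin _ _ hF hc) abse_EFin lte_fin.
  have eA : (n + q + n = 2 * n + q)%N by lia.
  split.
  + rewrite ltr_normr => /orP [h1|h1].
    * left; have hF1 : (n + q < F)%N.
        rewrite -(ltr_nat R) natrD; lra.
      rewrite ltnNge; apply/negP => h.
      have := (hc (n + q)%N).2; rewrite eA => /(_ h); lia.
    * right; have hF1 : (F + q < n)%N.
        rewrite -(ltr_nat R) natrD; lra.
      split; first lia.
      have := (hc (n - q - 1)%N).1; have -> : (n - q - 1 + n = 2 * n - q - 1)%N by lia.
      apply; lia.
  + move=> [hA|[hq hB]].
    * have hF1 : (n + q < F)%N.
        rewrite ltnNge; apply/negP => h.
        have := (hc (n + q)%N).1 h; rewrite eA; lia.
      have : ((n + q).+1%:R <= F%:R :> R) by rewrite ler_nat.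
      rewrite -addn1 !natrD => h2.
      rewrite ltr_normr; apply/orP; left; lra.
    * have hF1 : (F <= n - q - 1)%N.
        apply/(hc _).2; have -> : (n - q - 1 + n = 2 * n - q - 1)%N by lia.
        exact: hB.
      have : ((F + q).+1%:R <= n%:R :> R) by rewrite ler_nat; lia.
      rewrite -addn1 !natrD => h2.
      rewrite ltr_normr; apply/orP; right; lra.
Qed.

End Comb.

Lemma final_real (R : realType) (X : \bar R) (k t M B : R) :
  0 < M -> 1 <= B -> 0 <= t -> 0 <= k -> k <= 2 * M ->
  (forall l, 0 <= l -> l * B <= 1/2 ->
     (X <= (expR (2 * l ^+ 2 * B ^+ 2 * k - l * t))%:E)%E) ->
  (X <= (expR (- (t ^+ 2 / (16 * M * B ^+ 2))) + expR (- (t / (4 * B))))%:E)%E.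
Proof.
move=> M0 B1 t0 k0 kM hX.
have B0 : 0 < B by lra.
case: (leP t (4 * M * B)) => ht.
- have l0 : 0 <= t / (8 * M * B ^+ 2).
    by apply: divr_ge0 => //; apply: mulr_ge0; [lra| exact: sqr_ge0].
  have lB : t / (8 * M * B ^+ 2) * B <= 1/2.
    rewrite mulrAC ler_pdivrMr; last by apply: mulr_gt0; [lra| exact: exprn_gt0].
    have : t * B <= 4 * M * B * B by apply: ler_wpM2r; lra.
    move=> h; apply: le_trans h _; rewrite le_eqVlt; apply/orP; left; apply/eqP.
    by rewrite expr2; field.
  apply: le_trans (hX _ l0 lB) _; rewrite lee_fin.
  apply: le_trans (_ : expR (- (t ^+ 2 / (16 * M * B ^+ 2))) <= _); last first.
    by rewrite lerDl expR_ge0.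
  rewrite ler_expR.
  have E : 2 * (t / (8 * M * B ^+ 2)) ^+ 2 * B ^+ 2 * k - t / (8 * M * B ^+ 2) * t
     + t ^+ 2 / (16 * M * B ^+ 2) = t ^+ 2 * (k - 2 * M) / (32 * M ^+ 2 * B ^+ 2).
    by field; apply/andP; split; lra.
  rewrite -subr_le0 opprK E; apply: mulr_le0_ge0.
    apply: mulr_ge0_le0; [exact: sqr_ge0| lra].
  by rewrite invr_ge0; apply: mulr_ge0; [apply: mulr_ge0; [lra|exact: sqr_ge0]|exact: sqr_ge0].
- have l0 : 0 <= 1 / (2 * B) by apply: divr_ge0; lra.
  have lB : 1 / (2 * B) * B <= 1/2 by rewrite le_eqVlt; apply/orP; left; apply/eqP; field; lra.
  apply: le_trans (hX _ l0 lB) _; rewrite lee_fin.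
  apply: le_trans (_ : expR (- (t / (4 * B))) <= _); last first.
    by rewrite lerDr expR_ge0.
  rewrite ler_expR.
  have E : 2 * (1 / (2 * B)) ^+ 2 * B ^+ 2 * k - 1 / (2 * B) * t = k / 2 - t / (2 * B).
    by field; lra.
  rewrite E.
  have : M < t / (4 * B) by rewrite ltr_pdivlMr; lra.
  have : t / (2 * B) = 2 * (t / (4 * B)) by field; lra.
  lra.
Qed.

Lemma tail_cmp (R : realType) (t y M B : R) : 0 < M -> 1 <= B -> 0 <= y -> y / 8 <= t ->
  expR (- (t ^+ 2 / (16 * M * B ^+ 2))) + expR (- (t / (4 * B))) <=
  expR (- (1 / (1024 * B ^+ 2)) * (y ^+ 2 / M)) + expR (- (1 / (1024 * B ^+ 2)) * y).
Proof.
move=> M0 B1 y0 yt.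
have B0 : 0 < B by lra.
apply: lerD; rewrite ler_expR mulNr lerN2.
- have e : 1 / (1024 * B ^+ 2) * (y ^+ 2 / M) = (y / 8) ^+ 2 / (16 * M * B ^+ 2).
    by field; apply/andP; split; lra.
  rewrite e; apply: ler_wpM2r.
    by rewrite invr_ge0; apply: mulr_ge0; [lra|exact: sqr_ge0].
  have y80 : 0 <= y / 8 by lra.
  nra.
- have e : 1 / (1024 * B ^+ 2) * y = (y / 8) / (4 * B) * (1 / (32 * B)).
    by field; lra.
  rewrite e; apply: le_trans (_ : y / 8 / (4 * B) <= _).
    rewrite -[X in _ <= X]mulr1; apply: ler_wpM2l.
      by apply: divr_ge0; lra.
    by rewrite ler_pdivrMr; lra.
  by apply: ler_wpM2r; [rewrite invr_ge0; lra|].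
Qed.

Lemma natB1 n q : (q < n)%N -> (2 * n - q - 1 - 1).+1 = (2 * n - q - 1)%N.
Proof. lia. Qed.

Lemma natr_kB (R : realType) n q : (q < n)%N ->
  ((2 * n - q - 1)%N%:R : R) = 2 * n%:R - q%:R - 1.
Proof.
move=> hq; have e : (2 * n - q - 1 + (q + 1) = 2 * n)%N by lia.
have := congr1 (fun m : nat => m%:R : R) e. rewrite !natrD => E; lra.
Qed.

Lemma natr_kB_le (R : realType) n q : ((2 * n - q - 1)%N%:R : R) <= 2 * n%:R.
Proof. by rewrite -natrM ler_nat; lia. Qed.

Local Open Scope classical_set_scope.
Local Open Scope ring_scope.

Theorem lemmaA1 (R : realType) (N : nat) (K : 'M[R]_N) (mu : 'rV[R]_N)
    (p : 'I_N -> R) :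
  stochastic K -> unique_closed_irreducible K -> stationary K mu ->
  (forall i, 0 < p i < 1) ->
  \sum_i mu 0 i * p i = 1 / 2 ->
  exists C C' y0 : R, 0 < C /\ 0 < C' /\
    forall (n : nat) (y : R) (eta : 'rV[R]_N),
      (1 <= n)%N -> y0 <= y -> prob_vec eta ->
      forall (d : measure_display) (Omega : measurableType d)
             (P : probability Omega R)
             (Rc : nat -> Omega -> 'I_N) (xi : nat -> Omega -> bool),
        (forall j r, measurable [set w | Rc j w = r]) ->
        (forall j, measurable [set w | xi j w = true]) ->
        (forall L (r : nat -> 'I_N) (b : nat -> bool),
           P [set w | forall j, (j < L)%N -> Rc j w = r j /\ xi j w = b j]
           = (fdd K p eta L r b)%:E) ->
        (P [set w | (y%:E < `|sumG R xi n w|)%E]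
         <= (C * (expR (- C' * (y ^+ 2 / Num.max y (8 * n%:R)))
                  + expR (- C' * y)))%:E)%E.
Proof.
move=> sK uK stat p01 pbar.
have [i0 _] : exists i0 : 'I_N, True.
  by case: uK => C [[/set0Pn [c _] _] _]; exists c.
have muf : \sum_i mu 0 i * (p i - 1 / 2) = 0.
  under eq_bigr do rewrite mulrBr.
  rewrite sumrB pbar -mulr_suml (proj2 (proj1 stat)); lra.
have [h hpois] := @poisson R N K sK uK mu _ stat muf.
have hpois' : forall i, h i - Kh R N K h i = p i - 1 / 2 := hpois.
pose H := \sum_i (`|h i| + `|Kh R N K h i|).
have H0 : 0 <= H by apply: sumr_ge0 => i _; apply: addr_ge0.
have hHK : forall i, `|h i| + `|Kh R N K h i| <= H.
  move=> i; rewrite /H (bigD1 i) //=.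
  have : 0 <= \sum_(j | j != i) (`|h j| + `|Kh R N K h j|).
    by apply: sumr_ge0 => j _; apply: addr_ge0.
  lra.
have hH : forall i, `|h i| <= H.
  by move=> i; have := hHK i; have := normr_ge0 (Kh R N K h i); lra.
have KhH : forall i, `|Kh R N K h i| <= H.
  by move=> i; have := hHK i; have := normr_ge0 (h i); lra.
have B1 : 1 <= 1 + 2 * H by lra.
exists 2, (1 / (1024 * (1 + 2 * H) ^+ 2)), (8 * H + 4).
split; first lra.
split; first by apply: divr_gt0; [lra| apply: mulr_gt0; [lra| apply: exprn_gt0; lra]].
move=> n y eta hn hy peta d Omega P Rc xi mRc mxi hfdd.
have y0 : 0 <= y by lra.
have /andP [hq1 hq2] := truncn_itv y0.
set q := Num.truncn y in hq1 hq2 *.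
have hq2' : y < q%:R + 1 by rewrite -addn1 natrD in hq2.
pose PhiA := fun g : nat -> 'I_N * bool => (\sum_(i < 2 * n + q) ((g i).2 : nat) < n)%N.
pose PhiB := fun g : nat -> 'I_N * bool =>
  (q < n)%N && (n <= \sum_(i < 2 * n - q - 1) ((g i).2 : nat))%N.
have eqev : [set w | (y%:E < `|sumG R xi n w|)%E] =
   [set w | PhiA (pathw N d Omega Rc xi w)] `|` [set w | PhiB (pathw N d Omega Rc xi w)].
  apply/seteqP; split => w /=.
  - move/(@sumG_char R _ xi w n y hn y0).1 => [hA|[hq hB]]; [left|right] => //.
    by rewrite /PhiB hq.
  - case=> [hA|/andP [hq hB]]; apply/(@sumG_char R _ xi w n y hn y0).2; [left|right] => //.
rewrite eqev.
have locA : forall g g' : nat -> 'I_N * bool,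
    (forall i, (i < 2 * n + q)%N -> g i = g' i) -> PhiA g = PhiA g'.
  move=> g g' e; rewrite /PhiA; congr (_ < _)%N.
  by apply: eq_bigr => i _; rewrite e.
have locB : forall g g' : nat -> 'I_N * bool,
    (forall i, (i < 2 * n - q - 1)%N -> g i = g' i) -> PhiB g = PhiB g'.
  move=> g g' e; rewrite /PhiB; congr (_ && (_ <= _)%N).
  by apply: eq_bigr => i _; rewrite e.
set M := Num.max y (8 * n%:R).
have yM : y <= M by rewrite le_max lexx.
have nM : 8 * n%:R <= M by rewrite le_max lexx orbT.
have M0 : 0 < M by lra.
have n1 : 1 <= n%:R :> R by rewrite ler1n.
pose tA := 1 + q%:R / 2 - 2 * H.
pose tB := (q%:R + 1) / 2 - 2 * H.
have [mA _] := @chernoff_ev R N K p eta h sK peta p01 H H0 d Omega P Rc xi mRc mxi hfdd i0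
   PhiA (2 * n + q)%N 0 0 locA (ltac:(rewrite normr0 mul0r; lra)) hH KhH
   (ltac:(move=> g _; rewrite mul0r lexx //)).
have [mB _] := @chernoff_ev R N K p eta h sK peta p01 H H0 d Omega P Rc xi mRc mxi hfdd i0
   PhiB (2 * n - q - 1)%N 0 0 locB (ltac:(rewrite normr0 mul0r; lra)) hH KhH
   (ltac:(move=> g _; rewrite mul0r lexx //)).
have PA : (P [set w | PhiA (pathw N d Omega Rc xi w)] <=
    (expR (- (tA ^+ 2 / (16 * M * (1 + 2 * H) ^+ 2))) +
     expR (- (tA / (4 * (1 + 2 * H)))))%:E)%E.
  apply: (@final_real R _ (2 * n + q)%N%:R tA M (1 + 2 * H)) => //.
  - rewrite /tA; lra.
  - rewrite natrD natrM; lra.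
  move=> l l0 lB.
  have hs : forall g, PhiA g -> l * tA <= - l * Dk R N K p h (2 * n + q)%N g.
    move=> g hg.
    have hb := @nsucc_D_bound R N K p h H hpois' g (2 * n + q - 1)%N hH KhH.
    have e : (2 * n + q - 1).+1 = (2 * n + q)%N by rewrite subn1 prednK // addn_gt0 muln_gt0 hn.
    rewrite e in hb.
    have hg' : ((\sum_(i < 2 * n + q) ((g i).2 : nat)).+1%:R <= n%:R :> R) by rewrite ler_nat.
    rewrite -addn1 natrD in hg'. rewrite natrD natrM in hb.
    move: hb hg'. set S := (\sum_(i < 2 * n + q) _)%:R.
    set D := Dk _ _ _ _ _ _ _. move=> hb hg'.
    have hD : D <= - tA by move: hb; rewrite ler_norml /tA => /andP [a b]; lra.
    by rewrite mulNr -mulrN; apply: ler_wpM2l => //; lra.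
  have [_ c] := @chernoff_ev R N K p eta h sK peta p01 H H0 d Omega P Rc xi mRc mxi hfdd i0
   PhiA (2 * n + q)%N (- l) (l * tA) locA
   (ltac:(by rewrite normrN ger0_norm)) hH KhH hs.
  by rewrite sqrrN -expRM_natr -expRD in c.
have PB : (P [set w | PhiB (pathw N d Omega Rc xi w)] <=
    (expR (- (tB ^+ 2 / (16 * M * (1 + 2 * H) ^+ 2))) +
     expR (- (tB / (4 * (1 + 2 * H)))))%:E)%E.
  apply: (@final_real R _ (2 * n - q - 1)%N%:R tB M (1 + 2 * H)) => //.
  - rewrite /tB; lra.
  - have := natr_kB_le R n q; lra.
  move=> l l0 lB.
  have hs : forall g, PhiB g -> l * tB <= l * Dk R N K p h (2 * n - q - 1)%N g.
    move=> g /andP [hq hg].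
    have hb := @nsucc_D_bound R N K p h H hpois' g (2 * n - q - 1 - 1)%N hH KhH.
    rewrite (@natB1 n q hq) (@natr_kB R n q hq) in hb.
    have hg' : (n%:R <= (\sum_(i < 2 * n - q - 1) ((g i).2 : nat))%:R :> R) by rewrite ler_nat.
    move: hb hg'; set S := (\sum_(i < 2 * n - q - 1) _)%:R;
      set D := Dk _ _ _ _ _ _ _ => hb hg'.
    have hD : tB <= D by move: hb; rewrite ler_norml /tB => /andP [a b]; lra.
    by apply: ler_wpM2l.
  have [_ c] := @chernoff_ev R N K p eta h sK peta p01 H H0 d Omega P Rc xi mRc mxi hfdd i0
   PhiB (2 * n - q - 1)%N l (l * tB) locB
   (ltac:(by rewrite ger0_norm)) hH KhH hs.
  by rewrite -expRM_natr -expRD in c.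
apply: le_trans (measureU2 P mA mB) _.
apply: le_trans (leeD PA PB) _.
rewrite -EFinD lee_fin.
have tA8 : y / 8 <= tA by rewrite /tA; lra.
have tB8 : y / 8 <= tB by rewrite /tB; lra.
have := @tail_cmp R tA y M (1 + 2 * H) M0 B1 y0 tA8.
have := @tail_cmp R tB y M (1 + 2 * H) M0 B1 y0 tB8.
lra.
Qed.
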